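(* Let $\mathbf p$ be an arbitrary pure strategy profile, with associated numbers $(u_i,v_i)_{i\in[m]}$. Let $i^*\in\arg\min_{i\in[m]}\{u_i+v_i\bar q\}$, and for $i\neq j$ let $x_{ij}\in\{0,1\}$ equal $1$ if and only if at least one user selects IP $(s_i,s_j,d)$. Then $\mathbf p$ is a Nash equilibrium if and only if both of the following hold: (i) for all $i\in[m]$ with $u_i>0$: $\bar q(u_i+v_i\bar q)\le u_{i^*}+v_{i^*}\bar q+\bar q+\frac{q\mu}{\phi}$; (ii) for all $i,l\in[m]$ with $x_{il}=1$: $u_l+v_l\bar q\le \min\left\{\bar q(u_i+1+v_i\bar q)-\frac{q\mu}{\phi},\ u_{i^*}+v_{i^*}\bar q+\bar q\right\}$.
   Context: Network model: there are $m\ge 2$ source nodes $s_1,\dots,s_m$ and one destination $d$. Source $s_i$ has a set $N_i$ of $n_i$ users. Each user generates an independent Poisson flow of packets of rate $\phi>0$; each direct link $(s_i,d)$ has service rate $\mu>0$; each sidelink $(s_i,s_j)$ loses packets independently with probability $q\in[0,1]$, and $\bar q=1-q$. Only pure strategies are considered: a user in $N_i$ chooses either the direct path (DP) $(s_i,d)$ or an indirect path (IP) $(s_i,s_j,d)$ for some $j\neq i$. For a pure profile $\mathbf p$, $u_i$ is the number of users of $N_i$ choosing DP and $v_i$ is the number of users of other sources choosing an IP $(s_j,s_i,d)$, $j\neq i$; $T_i=u_i\phi+v_i\bar q\phi$. The loss rate of a user $k\in N_i$ is $LR_k=\phi\frac{T_i}{T_i+\mu}$ if it uses DP, and $LR_k=\phi\left(q+\bar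 q\frac{T_j}{T_j+\mu}\right)$ if it uses IP $(s_i,s_j,d)$ (here $T_i,T_j$ include the user's own traffic). A Nash equilibrium is a pure profile in which no user can strictly decrease its loss rate by unilaterally switching to another route, all other users' routes being fixed. *)

(* Defs.v *)
From mathcomp Require Import all_boot all_order all_algebra.
Set Implicit Arguments. Unset Strict Implicit. Unset Printing Implicit Defensive.
Import Order.TTheory GRing.Theory Num.Theory.
Local Open Scope ring_scope.

(* Users form a finite type U; [src k] is the source node
   of user k, so N_i = [set k | src k == i].
   A pure profile assigns to each user k a "relay node" p k : 'I_m:
     p k = src k       means k uses the direct path (s_i, d);
     p k = j <> src k  means k uses the indirect path (s_i, s_j, d). *)

Section Model.
Variables (R : realFieldType) (m : nat) (U : finType) (src : U -> 'I_m).

Definition profile := U -> 'I_m.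

Definition unum (p : profile) (i : 'I_m) : nat :=
  #|[set k : U | (src k == i) && (p k == i)]|.

Definition vnum (p : profile) (i : 'I_m) : nat :=
  #|[set k : U | (src k != i) && (p k == i)]|.

Variables (phi mu q : R).
Definition qbar := 1 - q.

Definition traffic (p : profile) (i : 'I_m) : R :=
  (unum p i)%:R * phi + (vnum p i)%:R * qbar * phi.

Definition loss_rate (p : profile) (k : U) : R :=
  let j := p k in
  if j == src k then phi * (traffic p j / (traffic p j + mu))
  else phi * (q + qbar * (traffic p j / (traffic p j + mu))).

Definition deviate (p : profile) (k : U) (r : 'I_m) : profile :=
  fun k' => if k' == k then r else p k'.

Definition nash_eq (p : profile) : Prop :=
  forall (k : U) (r : 'I_m), loss_rate p k <= loss_rate (deviate p k r) k.

Definition wload (p : profile) (i : 'I_m) : R :=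
  (unum p i)%:R + (vnum p i)%:R * qbar.

Definition xsel (p : profile) (i l : 'I_m) : bool :=
  (i != l) && [exists k : U, (src k == i) && (p k == l)].

End Model.

(* Main.v *)
Require Import Defs.
From mathcomp Require Import all_boot all_order all_algebra.
From mathcomp Require Import ring lra zify.
Import Order.TTheory GRing.Theory Num.Theory.
Local Open Scope ring_scope.
Section S.
Variables (R : realFieldType) (m : nat) (U : finType) (src : U -> 'I_m).
Variables (phi mu q : R).
Hypotheses (phi0 : 0 < phi) (mu0 : 0 < mu) (q0 : 0 <= q) (q1 : q <= 1).

Lemma card_dev (P : U -> 'I_m -> bool) (p : profile m U) k r :
  (#|[set k' | P k' (deviate p k r k')]| + P k (p k)
   = #|[set k' | P k' (p k')]| + P k r)%N.
Proof.
rewrite (cardsD1 k [set k' | P k' (deviate p k r k')]) (cardsD1 k [set k' | P k' (p k')]).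
have -> : [set k' | P k' (deviate p k r k')] :\ k = [set k' | P k' (p k')] :\ k.
  by apply/setP => x; rewrite !inE /deviate; case: eqP.
rewrite !inE /deviate eqxx; lia.
Qed.

Lemma unum_dev (p : profile m U) k r j : ((unum src (deviate p k r) j)%:R : R) =
  (unum src p j)%:R + ((src k == j) && (r == j))%:R - ((src k == j) && (p k == j))%:R.
Proof.
have := congr1 (fun n => n%:R : R) (card_dev (fun k' x => (src k' == j) && (x == j)) p k r).
rewrite /unum !natrD /= => E; lra.
Qed.

Lemma vnum_dev (p : profile m U) k r j : ((vnum src (deviate p k r) j)%:R : R) =
  (vnum src p j)%:R + ((src k != j) && (r == j))%:R - ((src k != j) && (p k == j))%:R.
Proof.
have := congr1 (fun n => n%:R : R) (card_dev (fun k' x => (src k' != j) && (x == j)) p k r).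
rewrite /vnum !natrD /= => E; lra.
Qed.

Lemma wload_ge0 (p : profile m U) j : 0 <= wload src q p j.
Proof. rewrite /wload /qbar; apply: addr_ge0; first exact: ler0n. apply: mulr_ge0; first exact: ler0n. by rewrite subr_ge0. Qed.

Lemma lr_eq (p : profile m U) k : loss_rate src phi mu q p k =
  phi - phi * mu * (if p k == src k then 1 else qbar q) / (phi * wload src q p (p k) + mu).
Proof.
have W0 := wload_ge0 p (p k).
have H0 : 0 < phi * wload src q p (p k) + mu by rewrite ltr_wpDl // mulr_ge0 // ltW.
have H : phi * wload src q p (p k) + mu != 0 by rewrite lt0r_neq0.
have E : traffic src phi q p (p k) = phi * wload src q p (p k).
  by rewrite /traffic /wload; ring.
rewrite /loss_rate /= E; case: ifP => _; rewrite /qbar; field; exact: H.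
Qed.

Lemma key (g g' X Y : R) : 0 <= X -> 0 <= Y ->
  (phi - phi * mu * g / (X + mu) <= phi - phi * mu * g' / (Y + mu)) =
  (g' * (X + mu) <= g * (Y + mu)).
Proof.
move=> X0 Y0; move: mu0 => mu0'.
have HX : 0 < X + mu by lra.
have HY : 0 < Y + mu by lra.
rewrite lerD2l lerN2 -!mulrA !ler_pM2l // ler_pdivrMr // mulrAC ler_pdivlMr //.
Qed.

Lemma dev_k (p : profile m U) k r : deviate p k r k = r.
Proof. by rewrite /deviate eqxx. Qed.

Lemma wload_dev (p : profile m U) k r : r != p k ->
  wload src q (deviate p k r) r = wload src q p r + (if r == src k then 1 else qbar q).
Proof.
move=> rp; rewrite /wload unum_dev vnum_dev eqxx [p k == r]eq_sym (negbTE rp) !andbF !andbT.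
rewrite [r == src k]eq_sym; case: (src k == r) => /=; rewrite ?mul1r ?mul0r; ring.
Qed.

Lemma dev_cond (p : profile m U) k r : r != p k ->
  (loss_rate src phi mu q p k <= loss_rate src phi mu q (deviate p k r) k) =
  ((if r == src k then 1 else qbar q) * (phi * wload src q p (p k) + mu) <=
   (if p k == src k then 1 else qbar q) *
     (phi * (wload src q p r + (if r == src k then 1 else qbar q)) + mu)).
Proof.
move=> rp; rewrite !lr_eq dev_k wload_dev // key //.
  by apply: mulr_ge0; [exact: ltW | exact: wload_ge0].
rewrite -wload_dev //; apply: mulr_ge0; [exact: ltW | exact: wload_ge0].
Qed.

Lemma dev_same (p : profile m U) k : loss_rate src phi mu q (deviate p k (p k)) k = loss_rate src phi mu q p k.
Proof.
rewrite !lr_eq dev_k; congr (_ - _ / (phi * _ + mu)).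
by rewrite /wload unum_dev vnum_dev; ring.
Qed.

Lemma ex_of_card (P : pred U) : (0 < #|[set k | P k]|)%N -> exists k, P k.
Proof. by rewrite card_gt0 => /set0Pn [k]; rewrite inE => Pk; exists k. Qed.

Lemma main (p : profile m U) (istar : 'I_m) :
  (forall i : 'I_m, wload src q p istar <= wload src q p i) ->
  nash_eq src phi mu q p <->
  ((forall i : 'I_m, (0 < unum src p i)%N ->
      qbar q * wload src q p i
        <= wload src q p istar + qbar q + q * mu / phi) /\
   (forall i l : 'I_m, xsel src p i l ->
      wload src q p l
        <= Num.min (qbar q * ((unum src p i)%:R + 1 + (vnum src p i)%:R * qbar q)
                      - q * mu / phi)
                   (wload src q p istar + qbar q))).
Proof.
move=> Hmin.
move: phi0 mu0 q0 q1 => ph0 m0 qq0 qq1.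
set W := wload src q p in Hmin *.
have W0 : forall j, 0 <= W j := wload_ge0 p.
set c := q * mu / phi.
have Hc : q * mu = phi * c by rewrite /c; field; rewrite lt0r_neq0.
have c0 : 0 <= c by rewrite /c divr_ge0 ?mulr_ge0 // ltW.
have EW : forall i, (unum src p i)%:R + 1 + (vnum src p i)%:R * qbar q = W i + 1.
  by move=> i; rewrite /W /wload; ring.
have Wst := W0 istar.
rewrite /qbar in EW Hmin *.
set Q := 1 - q in EW Hmin *.
have Q0 : 0 <= Q by rewrite /Q subr_ge0.
have Q1 : Q <= 1 by rewrite /Q; lra.
have HQ : q = 1 - Q by rewrite /Q; ring.
split.
- move=> H; split.
  + move=> i /ex_of_card [k /andP [/eqP ski /eqP pki]].
    have Wi := W0 i.
    case: (eqVneq istar i) => [->|ni].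
      have : 0 <= 1 - Q by rewrite subr_ge0.
      move=> Q1'; have := mulr_ge0 Q1' Wi; nra.
    have := H k istar; rewrite dev_cond; last by rewrite pki.
    rewrite pki ski eqxx (negbTE ni) mul1r /qbar -/Q -/W => Hk.
    rewrite -(ler_pM2l ph0).
    have -> : phi * (W istar + Q + c) = phi * (W istar + Q) + q * mu by rewrite Hc; ring.
    have Hm : mu = Q * mu + q * mu by rewrite /Q; ring.
    lra.
  + move=> i l /andP [nil /existsP [k /andP [/eqP ski /eqP pkl]]].
    have Wi := W0 i; have Wl := W0 l.
    rewrite EW le_min.
    have HA : W l <= Q * (W i + 1) - c.
      have := H k i; rewrite dev_cond; last by rewrite pkl.
      rewrite pkl ski eqxx eq_sym (negbTE nil) mul1r /qbar -/Q -/W => Hk.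
      rewrite -(ler_pM2l ph0) mulrBr -Hc; nra.
    rewrite HA /=.
    case: (eqVneq istar l) => [->|nsl]; first lra.
    case: (eqVneq istar i) => [->|nsi].
      have : 0 <= 1 - Q by rewrite subr_ge0.
      move=> Q1'; have := mulr_ge0 Q1' Wi; nra.
    have := H k istar; rewrite dev_cond; last by rewrite pkl.
    rewrite pkl ski (negbTE nsi) eq_sym (negbTE nil) /qbar -/Q -/W => Hk.
    have [Qp|] := ltrP 0 Q.
      by move: Hk; rewrite ler_pM2l // lerD2r ler_pM2l.
    move=> Qn; have Qz : Q = 0 by lra.
    move: HA; rewrite Qz; lra.
- move=> [Hi Hii] k r.
  case: (eqVneq r (p k)) => [->|rp]; first by rewrite dev_same.
  rewrite dev_cond // /qbar -/Q -/W.
  have Wr := W0 r; have Wk := W0 (p k).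
  case: (eqVneq (p k) (src k)) => [pks|pks].
    have rs : (r == src k) = false by apply/negbTE; rewrite -pks.
    rewrite rs mul1r.
    have Hu : (0 < unum src p (src k))%N.
      by rewrite card_gt0; apply/set0Pn; exists k; rewrite inE pks eqxx.
    have := Hi _ Hu; rewrite -pks -/W => Hk.
    have := Hmin r => Hm.
    have Hk' : phi * (Q * W (p k)) <= phi * (W istar + Q + c).
      by rewrite ler_pM2l.
    have Hm' : phi * W istar <= phi * W r by rewrite ler_pM2l.
    move: Hk'; have -> : phi * (W istar + Q + c) = phi * (W istar + Q) + q * mu by rewrite Hc; ring.
    have Hmu : mu = Q * mu + q * mu by rewrite /Q; ring.
    move=> Hk'; lra.
  have Hx : xsel src p (src k) (p k).
    by rewrite /xsel eq_sym pks /=; apply/existsP; exists k; rewrite !eqxx.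
  have := Hii _ _ Hx; rewrite EW le_min /qbar -/Q => /andP [HA HB].
  case: (eqVneq r (src k)) => [rs|rs].
    rewrite mul1r.
    have HA' : phi * W (p k) <= phi * (Q * (W (src k) + 1) - c) by rewrite ler_pM2l.
    move: HA'; have -> : phi * (Q * (W (src k) + 1) - c) = Q * phi * (W (src k) + 1) - q * mu by rewrite Hc; ring.
    have Hmu : mu = Q * mu + q * mu by rewrite /Q; ring.
    move=> HA'; rewrite rs; lra.
  apply: ler_wpM2l => //; rewrite lerD2r ler_pM2l //.
  have := Hmin r; lra.
Qed.
End S.

Theorem theorem2 (R : realFieldType) (m : nat) (U : finType) (src : U -> 'I_m)
    (phi mu q : R) (p : profile m U) (istar : 'I_m) :
  (2 <= m)%N -> 0 < phi -> 0 < mu -> 0 <= q -> q <= 1 ->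
  (forall i : 'I_m, wload src q p istar <= wload src q p i) ->
  nash_eq src phi mu q p <->
  ((forall i : 'I_m, (0 < unum src p i)%N ->
      qbar q * wload src q p i
        <= wload src q p istar + qbar q + q * mu / phi) /\
   (forall i l : 'I_m, xsel src p i l ->
      wload src q p l
        <= Num.min (qbar q * ((unum src p i)%:R + 1 + (vnum src p i)%:R * qbar q)
                      - q * mu / phi)
                   (wload src q p istar + qbar q))).
Proof.
move=> _ ph0 m0 q0 q1 Hmin.
exact: (@main R m U src phi mu q ph0 m0 q0 q1 p istar Hmin).
Qed.
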